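(* Let $\alpha,\beta\in\mathbb{Z}[\mathrm{i}]$ with $|\alpha|,|\beta|>1$, and let $D_\alpha,D_\beta\subset\mathbb{Z}[\mathrm{i}]$ be finite sets containing $0$ such that every Gaussian integer has at least one $(\alpha,D_\alpha)$-expansion and at least one $(\beta,D_\beta)$-expansion. Let $(a_z)_{z\in\mathbb{Z}[\mathrm{i}]}$ be a configuration generated by a consistent DFAO $\mathcal{A}_\alpha=(S_\alpha,D_\alpha,\delta_\alpha,s_{0,\alpha},A,\tau_\alpha)$ in base $\alpha$ and by a consistent DFAO $\mathcal{A}_\beta=(S_\beta,D_\beta,\delta_\beta,s_{0,\beta},A,\tau_\beta)$ in base $\beta$. For $s\in S_\beta$ let $L_{\beta,s}=\{w\in D_\beta^*:\delta_\beta(s_{0,\beta},w)=s\}$, for $t\in S_\alpha$ let $L_{\alpha,t}=\{w\in D_\alpha^*:\delta_\alpha(s_{0,\alpha},w)=t\}$, and let $S_\infty=\{s\in S_\beta:[L_{\beta,s}]_\beta\text{ is infinite}\}$. If $\beta$ is not a root of an integer, then for every $s\in S_\infty$ there exists a state $t\in S_\alpha$ and three non-collinear Gaussian integers $x,y,z\in[L_{\beta,s}]_\beta\cap[L_{\alpha,t}]_\alpha$.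
   Context: For $\gamma\in\mathbb{Z}[\mathrm{i}]$ and a word $w=w_{n-1}\cdots w_0$, $[w]_\gamma=\sum_{j}w_j\gamma^j$, and $[L]_\gamma=\{[w]_\gamma:w\in L\}$; $w$ is a $(\gamma,D)$-expansion of $z$ if $[w]_\gamma=z$. A DFAO $(S,D,\delta,s_0,A,\tau)$ has finite state set $S$, transition map $\delta:S\times D\to S$ extended to words by $\delta(s,wa)=\delta(\delta(s,w),a)$, initial state $s_0$, output $\tau:S\to A$; it generates $(a_z)$ in base $\gamma$ and is consistent if $a_z=\tau(\delta(s_0,w))$ for every $w$ with $[w]_\gamma=z$. $\beta$ is a root of an integer if $\beta^n\in\mathbb{Z}$ for some $n\ge1$. *)

(* Defs.v *)
(* Gaussian integers are modelled as pairs of integers (re, im). *)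
From mathcomp Require Import all_boot all_order all_algebra.
Set Implicit Arguments. Unset Strict Implicit. Unset Printing Implicit Defensive.
Import Order.TTheory GRing.Theory Num.Theory.
Local Open Scope ring_scope.

Definition gint := (int * int)%type.

Definition g0 : gint := (0, 0).
Definition gadd (x y : gint) : gint := (x.1 + y.1, x.2 + y.2).
Definition gsub (x y : gint) : gint := (x.1 - y.1, x.2 - y.2).
Definition gmul (x y : gint) : gint :=
  (x.1 * y.1 - x.2 * y.2, x.1 * y.2 + x.2 * y.1).
Definition gnorm2 (x : gint) : int := x.1 ^+ 2 + x.2 ^+ 2.
Fixpoint gpow (x : gint) (n : nat) : gint :=
  if n is n'.+1 then gmul (gpow x n') x else (1, 0).

(* A word w = w_{n-1} ... w_0 is the list [:: w_{n-1}; ...; w_0]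
   (most significant digit first); [w]_gamma = sum_j w_j gamma^j. *)
Definition eval_word (gamma : gint) (w : seq gint) : gint :=
  foldl (fun acc d => gadd (gmul acc gamma) d) g0 w.

Definition word_over (D : seq gint) (w : seq gint) : bool := all (fun d => d \in D) w.

Definition all_expansions (gamma : gint) (D : seq gint) : Prop :=
  forall z : gint, exists w, word_over D w /\ eval_word gamma w = z.

Definition delta_star (S : Type) (delta : S -> gint -> S) (s : S) (w : seq gint) : S :=
  foldl delta s w.

(* the DFAO (S, D, delta, s0, A, tau) generates (a_z) in base gamma and is
   consistent: a_z = tau(delta(s0, w)) for every w over D with [w]_gamma = z *)
Definition consistent_generates (S : Type) (A : Type) (gamma : gint) (D : seq gint)
  (delta : S -> gint -> S) (s0 : S) (tau : S -> A) (a : gint -> A) : Prop :=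
  forall w, word_over D w -> a (eval_word gamma w) = tau (delta_star delta s0 w).

Definition in_val_lang (S : Type) (gamma : gint) (D : seq gint)
  (delta : S -> gint -> S) (s0 s : S) (z : gint) : Prop :=
  exists w, word_over D w /\ delta_star delta s0 w = s /\ eval_word gamma w = z.

Definition ginfinite (P : gint -> Prop) : Prop :=
  ~ (exists l : seq gint, forall z, P z -> z \in l).

Definition root_of_integer (beta : gint) : Prop :=
  exists n : nat, (0 < n)%N /\ (gpow beta n).2 = 0.

Definition gcollinear (x y z : gint) : Prop :=
  (y.1 - x.1) * (z.2 - x.2) - (y.2 - x.2) * (z.1 - x.1) = 0.

(* Main.v *)
Require Import Defs.
From mathcomp Require Import all_boot all_order all_algebra.
From mathcomp Require Import ring lra zify.
From Stdlib Require Import Classical.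
Import Order.TTheory GRing.Theory Num.Theory.
Local Open Scope ring_scope.

Definition cross (u v : gint) : int := u.1 * v.2 - u.2 * v.1.
Definition g1 : gint := (1, 0).

Ltac gs := rewrite /gmul /gadd /gsub /g0 /g1 /gnorm2 /cross /=; try (congr pair); ring.

Lemma gmulA x y z : gmul x (gmul y z) = gmul (gmul x y) z.
Proof. case: x => a b; case: y => c d; case: z => e f; gs. Qed.
Lemma gmulC x y : gmul x y = gmul y x.
Proof. case: x => a b; case: y => c d; gs. Qed.
Lemma gpowD x m n : gpow x (m + n) = gmul (gpow x m) (gpow x n).
Proof.
elim: n => [|n IH]; first by rewrite addn0 /=; case: (gpow x m) => a b; gs.
by rewrite addnS /= IH gmulA.
Qed.
Lemma gpowM x m n : gpow x (m * n) = gpow (gpow x m) n.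
Proof.
elim: n => [|n IH]; first by rewrite muln0.
by rewrite mulnS gpowD IH /= gmulC.
Qed.
Lemma gnorm2M x y : gnorm2 (gmul x y) = gnorm2 x * gnorm2 y.
Proof. case: x => a b; case: y => c d; gs. Qed.
Lemma gnorm2X x n : gnorm2 (gpow x n) = gnorm2 x ^+ n.
Proof. elim: n => [|n IH] /=; first by rewrite /gnorm2 /= expr0 expr1n expr0n.
by rewrite gnorm2M IH exprSr. Qed.
Lemma gnorm2_ge x : x.2 ^+ 2 <= gnorm2 x.
Proof. rewrite /gnorm2 lerDr; exact: sqr_ge0. Qed.
Lemma gnorm2_gt0 x : x != g0 -> 0 < gnorm2 x.
Proof. case: x => a b /=; rewrite /g0 /gnorm2 /= xpair_eqE negb_and => h.
have h1 : 0 <= a^+2 by exact: sqr_ge0. have h2 : 0 <= b^+2 by exact: sqr_ge0.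
case/orP: h => h.
  have : 0 < a ^+2 by rewrite exprn_even_gt0 //. lia.
have : 0 < b ^+2 by rewrite exprn_even_gt0 //. lia.
Qed.
Lemma cross_mul w u v : cross (gmul w u) (gmul w v) = gnorm2 w * cross u v.
Proof. case: w => a b; case: u => c d; case: v => e f; gs. Qed.
Lemma cross_fac w p q : cross (gsub (gmul w p) w) (gsub (gmul w q) w) = gnorm2 w * cross (gsub p g1) (gsub q g1).
Proof. case: w => a b; case: p => c d; case: q => e f; gs. Qed.
Lemma cross_pr p r : cross (gsub p g1) (gsub (gmul p r) g1) = gnorm2 p * r.2 + p.2 - (gmul p r).2.
Proof. case: p => a b; case: r => c d; gs. Qed.
Lemma test2 (P Q p2 q2 r2 : int) : 8 <= P -> 8 * Q <= P * P -> p2^+2 <= P -> q2 ^+2 <= Q -> r2 != 0 -> P * r2 = q2 - p2 -> False.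
Proof. move=> h8 hQ hp hq hr e.
have h1 : (P * r2)^+2 = (q2 - p2)^+2 by rewrite e.
have h2 : (q2 - p2)^+2 <= 2 * q2^+2 + 2 * p2^+2.
  have : 0 <= (q2 + p2)^+2 by rewrite sqr_ge0.
  move=> h; rewrite -subr_ge0; have -> : 2 * q2 ^+ 2 + 2 * p2 ^+ 2 - (q2 - p2) ^+ 2 = (q2 + p2)^+2 by ring. done.
have h3 : 1 <= r2^+2. have : r2 * r2 != 0 by rewrite mulf_neq0. rewrite expr2. nia.
have h4 : P * P <= (P * r2)^+2.
  rewrite exprMn -expr2 ler_peMr //. by rewrite sqr_ge0.
have h5 : 8 * P <= P * P by nia.
nia.
Qed.
Lemma pow8 (N : int) k : 2 <= N -> (3 <= k)%N -> 8 <= N ^+ k.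
Proof. move=> hN hk. rewrite -(subnKC hk) exprD.
have h1 : 1 <= N ^+ (k - 3) by rewrite exprn_ege1 // (le_trans _ hN).
have h3 : 8 <= N ^+ 3 by rewrite !exprS expr0; nia.
nia.
Qed.

Lemma key (ga D : gint) (z : nat -> gint) :
  2 <= gnorm2 ga -> (forall n, (0<n)%N -> (gpow ga n).2 != 0) -> D != g0 ->
  (forall a n, gmul (gsub ga g1) (gsub (z (a+n)%N) (z a)) = gmul D (gsub (gpow ga (a+n)) (gpow ga a))) ->
  forall a d e, (3 <= d)%N -> (d < e)%N -> (e + 3 <= 2*d)%N -> ~ gcollinear (z a) (z (a+d)%N) (z (a+e)%N).
Proof.
move=> hN hr hD hz a d e hd hde hed hcol.
have c0 : cross (gsub (z (a+d)%N) (z a)) (gsub (z (a+e)%N) (z a)) = 0 by exact: hcol.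
have c1 := cross_mul (gsub ga g1) (gsub (z (a+d)%N) (z a)) (gsub (z (a+e)%N) (z a)).
rewrite c0 mulr0 !hz cross_mul !gpowD cross_fac in c1.
have hDp := @gnorm2_gt0 D hD.
have hap : 0 < gnorm2 (gpow ga a) by rewrite gnorm2X exprn_gt0 // (lt_le_trans _ hN).
move/eqP: c1; rewrite mulf_eq0 gt_eqF //= mulf_eq0 gt_eqF //= => /eqP c2.
have qe : gpow ga e = gmul (gpow ga d) (gpow ga (e-d)) by rewrite -gpowD subnKC // ltnW.
rewrite qe cross_pr in c2.
apply: (@test2 (gnorm2 (gpow ga d)) (gnorm2 (gmul (gpow ga d) (gpow ga (e - d))))
   (gpow ga d).2 (gmul (gpow ga d) (gpow ga (e - d))).2 (gpow ga (e-d)).2).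
- by rewrite gnorm2X pow8.
- rewrite -qe !gnorm2X -exprD.
  have -> : (d + d = e + (d + d - e))%N by lia.
  rewrite exprD mulrC ler_pM2l ?exprn_gt0 ?(lt_le_trans _ hN) //.
  apply: pow8 => //; lia.
- exact: gnorm2_ge.
- exact: gnorm2_ge.
- apply: hr; lia.
- move: c2; set P := gnorm2 _; set R := (gpow ga (e-d)).2; lia.
Qed.
Section Words.
Variable b : gint.

Lemma foldl_eval acc w : foldl (fun acc d => gadd (gmul acc b) d) acc w =
  gadd (gmul acc (gpow b (size w))) (eval_word b w).
Proof.
elim: w acc => [|d w IH] acc /=.
  by rewrite /eval_word /=; case: acc => a c; gs.
rewrite /eval_word /= !IH -/(eval_word b w).
move: (gpow b (size w)) (eval_word b w) => [p1 p2] [e1 e2].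
case: acc => a c; case: d => d1 d2; case: b => b1 b2; gs.
Qed.

Lemma eval_cat w1 w2 : eval_word b (w1 ++ w2) =
  gadd (gmul (eval_word b w1) (gpow b (size w2))) (eval_word b w2).
Proof. by rewrite {1}/eval_word foldl_cat foldl_eval. Qed.
End Words.

Lemma flat_nseqS k (v : seq gint) : flatten (nseq k.+1 v) = flatten (nseq k v) ++ v.
Proof. elim: k => [|k IH]; first by rewrite /= cats0.
change (flatten (nseq k.+2 v)) with (v ++ flatten (nseq k.+1 v)).
rewrite [in LHS]IH catA. reflexivity. Qed.

Lemma word_over_cat D w1 w2 : word_over D (w1 ++ w2) = word_over D w1 && word_over D w2.
Proof. by rewrite /word_over all_cat. Qed.

Lemma word_over_flat D v k : word_over D v -> word_over D (flatten (nseq k v)).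
Proof. move=> h; elim: k => [|k IH] //.
change (flatten (nseq k.+1 v)) with (v ++ flatten (nseq k v)). by rewrite word_over_cat h IH. Qed.

Lemma delta_loop (S : Type) (delta : S -> gint -> S) q v k :
  delta_star delta q v = q -> delta_star delta q (flatten (nseq k v)) = q.
Proof. move=> h; elim: k => [|k IH] //.
change (flatten (nseq k.+1 v)) with (v ++ flatten (nseq k v)).
by rewrite /delta_star foldl_cat -/(delta_star delta q v) h. Qed.

Definition zpump b u v x k := eval_word b (u ++ (flatten (nseq k v) ++ x)).

Lemma alg1 Y g V B X :
  gsub (gadd (gmul (gadd (gmul (gadd (gmul Y g) V) g) V) B) X)
       (gadd (gmul (gadd (gmul Y g) V) B) X) =
  gmul (gsub (gadd (gmul (gadd (gmul Y g) V) B) X) (gadd (gmul Y B) X)) g.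
Proof. case: Y => ??; case: g => ??; case: V => ??; case: B => ??; case: X => ??; gs. Qed.

Lemma alg2 G D Zb Za Pb Pa g :
  G = gsub g g1 ->
  gmul G (gsub Zb Za) = gmul D (gsub Pb Pa) ->
  gmul G (gsub (gadd Zb (gmul Pb D)) Za) = gmul D (gsub (gmul Pb g) Pa).
Proof.
move=> -> h.
have -> : gmul (gsub g g1) (gsub (gadd Zb (gmul Pb D)) Za) =
   gadd (gmul (gsub g g1) (gsub Zb Za)) (gmul (gsub g g1) (gmul Pb D)).
  clear h; case: g => ??; case: Zb => ??; case: Za => ??; case: Pb => ??; case: D => ??; gs.
rewrite h; clear h. case: g => ??; case: Pa => ??; case: Pb => ??; case: D => ??; gs.
Qed.

Lemma sub_eq a c d : gsub a c = d -> a = gadd c d.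
Proof. case: a => ??; case: c => ??; case: d => ??; rewrite /gsub /gadd /= => [[e1 e2]]; congr pair; lia. Qed.
Lemma alg0 a c : c = gadd a (gmul (gpow (0,0) 0) (gsub c a)).
Proof. case: a => ??; case: c => ??; gs. Qed.
Lemma alg3 Z2 Z1 Z0 P D g : gsub Z2 Z1 = gmul (gsub Z1 Z0) g -> Z1 = gadd Z0 (gmul P D) ->
  Z2 = gadd Z1 (gmul (gmul P g) D).
Proof. move=> /sub_eq -> ->. case: Z0 => ??; case: P => ??; case: D => ??; case: g => ??; gs. Qed.

Lemma alg4 G D x P : gmul G (gsub x x) = gmul D (gsub P P).
Proof. case: G => ??; case: D => ??; case: x => ??; case: P => ??; gs. Qed.

Lemma pump_rel b u v x :
  let z := zpump b u v x in let ga := gpow b (size v) in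
  forall a n, gmul (gsub ga g1) (gsub (z (a+n)%N) (z a)) =
     gmul (gsub (z 1%N) (z 0%N)) (gsub (gpow ga (a+n)) (gpow ga a)).
Proof.
move=> z ga.
pose y k := eval_word b (u ++ flatten (nseq k v)).
have hz : forall k, z k = gadd (gmul (y k) (gpow b (size x))) (eval_word b x).
  by move=> k; rewrite /z /zpump catA eval_cat.
have hy : forall k, y k.+1 = gadd (gmul (y k) ga) (eval_word b v).
  by move=> k; rewrite /y flat_nseqS catA eval_cat.
have hD : forall k, gsub (z k.+2) (z k.+1) = gmul (gsub (z k.+1) (z k)) ga.
  move=> k; rewrite !hz !hy; exact: alg1.
set D := gsub (z 1%N) (z 0%N).
have hP : forall k, z k.+1 = gadd (z k) (gmul (gpow ga k) D).
  elim=> [|k IH]; first by rewrite /D; exact: alg0.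
  by apply: alg3 (hD k) IH.
move=> a n; elim: n => [|n IH].
  by rewrite addn0; apply: alg4.
by rewrite addnS hP; apply: alg2 => //.
Qed.

Lemma col12 {x y z} : gcollinear x y z -> gcollinear y x z.
Proof. case: x => ??; case: y => ??; case: z => ??; rewrite /gcollinear /= => h; lia. Qed.
Lemma col23 {x y z} : gcollinear x y z -> gcollinear x z y.
Proof. case: x => ??; case: y => ??; case: z => ??; rewrite /gcollinear /= => h; lia. Qed.

Lemma noncol_any (Q : nat -> gint) n :
  (forall i j h, (i < j)%N -> (j < h)%N -> (h <= n)%N -> ~ gcollinear (Q i) (Q j) (Q h)) ->
  forall i j h : nat, i != j -> j != h -> i != h -> (i <= n)%N -> (j <= n)%N -> (h <= n)%N ->
  ~ gcollinear (Q i) (Q j) (Q h).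
Proof.
move=> H i j h hij hjh hih hi hj hh hc.
move/eqP: hij => hij; move/eqP: hjh => hjh; move/eqP: hih => hih.
case: (ltngtP i j) => c1; case: (ltngtP j h) => c2; case: (ltngtP i h) => c3; try lia.
all: first [ eapply (H i j h); [lia|lia|lia|exact hc]
      | eapply (H i h j); [lia|lia|lia|exact (col23 hc)]
      | eapply (H j i h); [lia|lia|lia|exact (col12 hc)]
      | eapply (H j h i); [lia|lia|lia|exact (col23 (col12 hc))]
      | eapply (H h i j); [lia|lia|lia|exact (col12 (col23 hc))]
      | eapply (H h j i); [lia|lia|lia|exact (col12 (col23 (col12 hc)))] ].
Qed.

Definition idx n i := (3 * (2 ^ n - 2 ^ (n - i)))%N.

Lemma pow2lt a b : (a < b)%N -> (2 * 2 ^ a <= 2 ^ b)%N.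
Proof. move=> h; rewrite -expnS leq_exp2l //. Qed.

Lemma idx_ok n i j h : (i < j)%N -> (j < h)%N -> (h <= n)%N ->
  [/\ (3 <= idx n j - idx n i)%N, (idx n j - idx n i < idx n h - idx n i)%N,
      (idx n h - idx n i + 3 <= 2 * (idx n j - idx n i))%N,
      (idx n i <= idx n j)%N & (idx n i <= idx n h)%N].
Proof.
move=> hij hjh hh.
have f1 : (2 * 2 ^ (n - j) <= 2 ^ (n - i))%N by apply: pow2lt; lia.
have f2 : (2 * 2 ^ (n - h) <= 2 ^ (n - j))%N by apply: pow2lt; lia.
have f3 : (1 <= 2 ^ (n - h))%N by rewrite expn_gt0.
have f4 : (2 ^ (n - i) <= 2 ^ n)%N by rewrite leq_exp2l // leq_subr.
rewrite /idx; split; lia.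
Qed.

Fixpoint words (D : seq gint) n : seq (seq gint) :=
  if n is n'.+1 then [::] :: [seq d :: w | d <- D, w <- words D n'] else [:: [::]].

Lemma in_words D n w : word_over D w -> (size w <= n)%N -> w \in words D n.
Proof.
elim: n w => [|n IH] [|d w] //= /andP [hd hw] hs.
rewrite in_cons; apply/orP; right; apply: allpairs_f => //; exact: IH.
Qed.

Lemma exists_min (P : seq gint -> Prop) w : P w ->
  exists w', P w' /\ forall w'', P w'' -> (size w' <= size w'')%N.
Proof.
move: {2}(size w) (leqnn (size w)) => n; elim: n w => [|n IH] w hs hp.
  by exists w; split => // w'' _; move: hs; rewrite leqn0 => /eqP ->.
case: (classic (exists w'', P w'' /\ (size w'' < size w)%N)) => [[w'' [h1 h2]]|hn].
  apply: (IH w'') => //; lia.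
exists w; split => // w'' h; rewrite leqNgt; apply/negP => h'; apply: hn; by exists w''.
Qed.

Lemma pow2ge (N : int) k : 2 <= N -> (0 < k)%N -> 2 <= N ^+ k.
Proof. move=> hN hk. rewrite -(subnKC hk) exprD expr1.
have h1 : 1 <= N ^+ (k - 1) by rewrite exprn_ege1 // (le_trans _ hN).
nia. Qed.

Lemma gadd0 a : gadd a g0 = a.
Proof. case: a => ??; gs. Qed.
Section Three. Local Open Scope nat_scope.
Lemma three (T S : finType) (f : T -> S) : (2 * #|S| < #|T|)%N ->
  exists i j h : T, [/\ i != j, j != h, i != h, f j = f i & f h = f i].
Proof.
move=> hc.
have [t ht] : exists t, (2 < #|[set x | f x == t]|)%N.
  case: (boolP [exists t, 2 < #|[set x | f x == t]|]) => [/existsP [t ht] | /existsPn hall].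
    by exists t.
  exfalso.
  have e : #|T| = (\sum_(t : S) #|[set x | f x == t]|)%N.
    rewrite -sum1_card (partition_big f predT) //=.
    apply: eq_bigr => t _; rewrite -sum1_card; apply: eq_bigl => x; by rewrite inE.
  have : (#|T| <= \sum_(t : S) 2)%N.
    rewrite e; apply: leq_sum => t _; rewrite leqNgt; exact: hall.
  rewrite sum_nat_const. have -> : #|[pred _ : S | true]| = #|S| by apply: eq_card. lia.
have [i hi] : exists i, i \in [set x | f x == t].
  apply/card_gt0P; lia.
have [j hj] : exists j, j \in [set x | f x == t] :\ i.
  apply/card_gt0P; move: ht; rewrite (cardsD1 i) hi; lia.
have [h hh] : exists h, h \in [set x | f x == t] :\ i :\ j.
  apply/card_gt0P; move: ht; rewrite (cardsD1 i) hi (cardsD1 j ([set x | f x == t] :\ i)) hj; lia.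
move: hh hj hi; rewrite !inE => /and3P [hhj hhi /eqP hh] /andP [hji /eqP hj] /eqP hi.
exists i, j, h; split => //; first by rewrite eq_sym.
  by rewrite eq_sym.
  by rewrite eq_sym.
  by rewrite hj hi.
by rewrite hh hi.
Qed.
End Three.

Theorem lemma3p4 (alpha beta : gint) (Dalpha Dbeta : seq gint)
  (Salpha Sbeta : finType) (A : Type)
  (delta_alpha : Salpha -> gint -> Salpha) (s0_alpha : Salpha) (tau_alpha : Salpha -> A)
  (delta_beta : Sbeta -> gint -> Sbeta) (s0_beta : Sbeta) (tau_beta : Sbeta -> A)
  (a : gint -> A) :
  1 < gnorm2 alpha -> 1 < gnorm2 beta ->
  g0 \in Dalpha -> g0 \in Dbeta ->
  all_expansions alpha Dalpha -> all_expansions beta Dbeta ->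
  consistent_generates alpha Dalpha delta_alpha s0_alpha tau_alpha a ->
  consistent_generates beta Dbeta delta_beta s0_beta tau_beta a ->
  ~ root_of_integer beta ->
  forall s : Sbeta,
    ginfinite (in_val_lang beta Dbeta delta_beta s0_beta s) ->
    exists (t : Salpha) (x y z : gint),
      [/\ in_val_lang beta Dbeta delta_beta s0_beta s x
        /\ in_val_lang alpha Dalpha delta_alpha s0_alpha t x,
          in_val_lang beta Dbeta delta_beta s0_beta s y
        /\ in_val_lang alpha Dalpha delta_alpha s0_alpha t y,
          in_val_lang beta Dbeta delta_beta s0_beta s z
        /\ in_val_lang alpha Dalpha delta_alpha s0_alpha t z
        & ~ gcollinear x y z].
Proof.
move=> _ hb _ _ hexa _ _ _ hnr s hinf.
set K := #|Sbeta|.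
have [z [hz hzl]] : exists z, in_val_lang beta Dbeta delta_beta s0_beta s z /\
    z \notin map (eval_word beta) (words Dbeta K).
  apply: NNPP => hn; apply: hinf; exists (map (eval_word beta) (words Dbeta K)) => z hz.
  case: (boolP (z \in _)) => // hz'; exfalso; apply: hn; by exists z.
case: hz => w0 hw0.
have [w [[hwD [hws hwz]] hmin]] := @exists_min (fun w => word_over Dbeta w /\
   delta_star delta_beta s0_beta w = s /\ eval_word beta w = z) w0 hw0.
have hK : (K < size w)%N.
  rewrite ltnNge; apply/negP => h; move/negP: hzl; apply; rewrite -hwz; apply: map_f.
  exact: in_words.
have [i [j [hij hg]]] : exists i j, (i < j <= K)%N /\
    delta_star delta_beta s0_beta (take i w) = delta_star delta_beta s0_beta (take j w).
  pose g := fun k : 'I_K.+1 => delta_star delta_beta s0_beta (take k w).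
  have : ~~ injectiveb g.
    apply/negP => /injectiveP hinj; have := leq_card _ hinj; rewrite card_ord; lia.
  case/injectivePn => c [d hcd hgcd].
  case: (ltngtP c d) => h.
  - exists c, d; split => //; apply/andP; split => //; rewrite -ltnS; exact: ltn_ord.
  - exists d, c; split => //; apply/andP; split => //; rewrite -ltnS; exact: ltn_ord.
  - by move: hcd; rewrite (val_inj h) eqxx.
move/andP: hij => [hij hjK].
set u := take i w; set v := drop i (take j w); set x := drop j w.
have huv : u ++ v = take j w.
  by rewrite /u /v -(take_takel w (ltnW hij)) cat_take_drop.
have hw : w = u ++ (v ++ x) by rewrite catA huv cat_take_drop.
have hsv : size v = (j - i)%N.
  rewrite /v size_drop size_takel //; lia.
have hwD' := hwD; rewrite hw !word_over_cat in hwD'; case/and3P: hwD' => hu hv hx.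
have hloop : delta_star delta_beta (delta_star delta_beta s0_beta u) v =
    delta_star delta_beta s0_beta u.
  by rewrite /delta_star -foldl_cat -/(delta_star _ _ (u ++ v)) huv -hg.
have hst : forall k, delta_star delta_beta s0_beta (u ++ (flatten (nseq k v) ++ x)) = s.
  move=> k; rewrite /delta_star !foldl_cat -/(delta_star _ _ u) -/(delta_star _ _ (flatten (nseq k v))).
  rewrite delta_loop //. rewrite -hws hw /delta_star !foldl_cat.
  rewrite -/(delta_star _ _ u) -/(delta_star _ (delta_star delta_beta s0_beta u) v) hloop //.
have hzin : forall k, in_val_lang beta Dbeta delta_beta s0_beta s (zpump beta u v x k).
  move=> k; exists (u ++ (flatten (nseq k v) ++ x)); split; last by split.
  by rewrite !word_over_cat hu hx word_over_flat.
have hz1 : zpump beta u v x 1 = z.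
  by rewrite -hwz hw /zpump /= cats0.
have hD : gsub (zpump beta u v x 1) (zpump beta u v x 0) != g0.
  apply/negP => /eqP /sub_eq; rewrite gadd0 => e.
  have hP : word_over Dbeta (u ++ x) /\ delta_star delta_beta s0_beta (u ++ x) = s /\
      eval_word beta (u ++ x) = z.
    split; first by rewrite word_over_cat hu hx.
    split; first exact: (hst 0%N).
    rewrite -hz1 e; reflexivity.
  have := hmin _ hP; rewrite {1}hw !size_cat hsv; lia.
set ga := gpow beta (size v).
have hN : 2 <= gnorm2 ga.
  rewrite /ga gnorm2X; apply: pow2ge; [lia | rewrite hsv; lia].
have hr : forall n, (0 < n)%N -> (gpow ga n).2 != 0.
  move=> n hn; rewrite /ga -gpowM; apply/eqP => e; apply: hnr.
  exists (size v * n)%N; split => //; rewrite muln_gt0 hn hsv; apply/andP; split => //; lia.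
set nn := (2 * #|Salpha|)%N.
set Q := fun k => zpump beta u v x (idx nn k).
have Hs : forall i j h, (i < j)%N -> (j < h)%N -> (h <= nn)%N -> ~ gcollinear (Q i) (Q j) (Q h).
  move=> c d e hcd hde he.
  have [h1 h2 h3 h4 h5] := idx_ok nn c d e hcd hde he.
  have := @key ga _ (zpump beta u v x) hN hr hD (pump_rel beta u v x) (idx nn c) _ _ h1 h2 h3.
  by rewrite !subnKC.
have hex : forall k : 'I_nn.+1, exists t, in_val_lang alpha Dalpha delta_alpha s0_alpha t (Q k).
  move=> k; case: (hexa (Q k)) => wa [hwa hev].
  exists (delta_star delta_alpha s0_alpha wa), wa; split => //.
have [f hf] := fin_all_exists hex.
have hcard : (2 * #|Salpha| < #|'I_nn.+1|)%N by rewrite card_ord.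
have [i1 [i2 [i3 [h12 h23 h13 hf2 hf3]]]] := @three _ _ f hcard.
exists (f i1), (Q i1), (Q i2), (Q i3); split.
- by split; [exact: hzin | exact: hf].
- by split; [exact: hzin | rewrite -hf2; exact: hf].
- by split; [exact: hzin | rewrite -hf3; exact: hf].
apply: (noncol_any Q nn Hs) => //; rewrite -ltnS; exact: ltn_ord.
Qed.
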